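(* For every $k\in\mathbb Z$, $\mathcal A=\mathbb Z[\mathbb P][x_{k-1},x_k,x_{k+1},x_{k+2}]$.
   Context: Fix positive integers $\ell_1,\ell_2$ and independent variables $p_{i,k}$ ($i=1,2$, $1\le k\le\ell_i$), $p_{i,0}=1$. Let $\mathbb P$ be the group of Laurent monomials in the $p_{i,k}$ and $\mathbb Z[\mathbb P]$ its group ring; let $\mathcal F=\mathbb Q(p_{i,k})(x_1,x_2)$ with $x_1,x_2$ independent. Put $P_1(z)=1+\sum_{k=1}^{\ell_1}p_{1,k}z^k$, $P_2(z)=1+\sum_{k=1}^{\ell_2}p_{2,k}z^k$ and $\overline P_i(z)=z^{\ell_i}P_i(z^{-1})/p_{i,\ell_i}$. Define $x_k\in\mathcal F$ for all $k\in\mathbb Z$ from $x_1,x_2$ by $x_{k+1}x_{k-1}=P_1(x_k)$ if $k\equiv1$, $P_2(x_k)$ if $k\equiv2$, $\overline P_1(x_k)$ if $k\equiv3$, $\overline P_2(x_k)$ if $k\equiv0\pmod4$. Let $\mathcal A$ be the $\mathbb Z[\mathbb P]$-subalgebra of $\mathcal F$ generated by all $x_k$. *)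

(* Defs.v *)
From HB Require Import structures.
From mathcomp Require Import all_boot all_order all_algebra.
From mathcomp Require Import fraction.
From mathcomp.multinomials Require Import mpoly.
Unset Printing Implicit Defensive.
Import Order.TTheory GRing.Theory Num.Theory.
Local Open Scope ring_scope.

(* Variables: n = l1 + l2 + 2 indeterminates over Q.
   'X_0 .. 'X_(l1-1)         : p_{1,1} .. p_{1,l1}
   'X_l1 .. 'X_(l1+l2-1)     : p_{2,1} .. p_{2,l2}
   'X_(l1+l2), 'X_(l1+l2+1)  : x_1, x_2 *)
Definition nvars (l1 l2 : nat) : nat := (l1 + l2).+2.

Definition Fld (l1 l2 : nat) : fieldType := {fraction {mpoly rat[nvars l1 l2]}}.

Definition var (l1 l2 : nat) (j : nat) : Fld l1 l2 :=
  tofrac ('X_(inord j) : {mpoly rat[nvars l1 l2]}).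

(* p_{i,k}, with p_{i,0} = 1; meaningful for i in {1,2}, 0 <= k <= l_i. *)
Definition pv (l1 l2 : nat) (i k : nat) : Fld l1 l2 :=
  if k == 0%N then 1
  else if i == 1%N then var l1 l2 k.-1 else var l1 l2 (l1 + k.-1).

Definition ell (l1 l2 : nat) (i : nat) : nat := if i == 1%N then l1 else l2.

Definition pidx (l1 l2 : nat) (i k : nat) : Prop :=
  (i = 1%N \/ i = 2%N) /\ (1 <= k <= ell l1 l2 i)%N.

Definition Ppoly (l1 l2 : nat) (i : nat) (z : Fld l1 l2) : Fld l1 l2 :=
  1 + \sum_(1 <= k < (ell l1 l2 i).+1) pv l1 l2 i k * z ^+ k.

(* Pbar_i(z) = z^{l_i} P_i(z^{-1}) / p_{i,l_i}
             = (sum_{k=0}^{l_i} p_{i,k} z^{l_i - k}) / p_{i,l_i} *)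
Definition Pbar (l1 l2 : nat) (i : nat) (z : Fld l1 l2) : Fld l1 l2 :=
  (\sum_(0 <= k < (ell l1 l2 i).+1) pv l1 l2 i k * z ^+ (ell l1 l2 i - k))
    / pv l1 l2 i (ell l1 l2 i).

(* exchange polynomial used in x_{j+1} x_{j-1} = Q_j(x_j) *)
Definition Qexch (l1 l2 : nat) (j : int) (z : Fld l1 l2) : Fld l1 l2 :=
  match absz (j %% 4)%Z with
  | 1%N => Ppoly l1 l2 1 z
  | 2%N => Ppoly l1 l2 2 z
  | 3%N => Pbar l1 l2 1 z
  | _ => Pbar l1 l2 2 z
  end.

(* fwd m = (x_{m+1}, x_{m+2}) *)
Fixpoint fwd (l1 l2 : nat) (m : nat) : Fld l1 l2 * Fld l1 l2 :=
  match m with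
  | 0%N => (var l1 l2 (l1 + l2), var l1 l2 (l1 + l2).+1)
  | m'.+1 => let: (a, b) := fwd l1 l2 m' in
             (b, Qexch l1 l2 (m'.+2)%:Z b / a)
  end.

(* bwd m = (x_{1-m}, x_{2-m}) *)
Fixpoint bwd (l1 l2 : nat) (m : nat) : Fld l1 l2 * Fld l1 l2 :=
  match m with
  | 0%N => (var l1 l2 (l1 + l2), var l1 l2 (l1 + l2).+1)
  | m'.+1 => let: (a, b) := bwd l1 l2 m' in
             (Qexch l1 l2 (1 - m'%:Z) a / b, a)
  end.

Definition xseq (l1 l2 : nat) (k : int) : Fld l1 l2 :=
  if (1 <= k)%R then (fwd l1 l2 (absz (k - 1))).1
  else (bwd l1 l2 (absz (1 - k))).1.

(* The Z[P]-subalgebra of F generated by a set S: the smallest subring of F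
   containing all p_{i,k}^{±1} (which generate Z[P] as a ring) and S. *)
Inductive subalg (l1 l2 : nat) (S : Fld l1 l2 -> Prop) : Fld l1 l2 -> Prop :=
| sa_gen y : S y -> subalg l1 l2 S y
| sa_p i k : pidx l1 l2 i k -> subalg l1 l2 S (pv l1 l2 i k)
| sa_pinv i k : pidx l1 l2 i k -> subalg l1 l2 S (pv l1 l2 i k)^-1
| sa_one : subalg l1 l2 S 1
| sa_opp y : subalg l1 l2 S y -> subalg l1 l2 S (- y)
| sa_add y z : subalg l1 l2 S y -> subalg l1 l2 S z -> subalg l1 l2 S (y + z)
| sa_mul y z : subalg l1 l2 S y -> subalg l1 l2 S z -> subalg l1 l2 S (y * z).

Definition Aalg (l1 l2 : nat) : Fld l1 l2 -> Prop :=
  subalg l1 l2 (fun y => exists k : int, y = xseq l1 l2 k).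

Definition Afour (l1 l2 : nat) (k : int) : Fld l1 l2 -> Prop :=
  subalg l1 l2 (fun y => y = xseq l1 l2 (k - 1) \/ y = xseq l1 l2 k
                   \/ y = xseq l1 l2 (k + 1) \/ y = xseq l1 l2 (k + 2)).

(* Main.v *)
Require Import Defs.
From HB Require Import structures.
From mathcomp Require Import all_boot all_order all_algebra.
From mathcomp Require Import fraction.
From mathcomp.multinomials Require Import mpoly.
From mathcomp Require Import zify.
Set Implicit Arguments.
Unset Strict Implicit.
Local Open Scope ring_scope.
Import Order.TTheory GRing.Theory Num.Theory.

Definition ev (l1 l2 : nat) (p : {mpoly rat[nvars l1 l2]}) : rat :=
  p.@[fun _ => 1].

Definition posF (l1 l2 : nat) (x : Fld l1 l2) : Prop :=
  exists f g : {mpoly rat[nvars l1 l2]}, 0 < ev f /\ 0 < ev g /\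
    x = tofrac f / tofrac g.

Lemma posF_neq0 l1 l2 (x : Fld l1 l2) : posF x -> x != 0.
Proof.
move=> [f [g [hf [hg ->]]]].
have f0 : f != 0 by apply: contraTneq hf => ->; rewrite /ev meval0 ltxx.
have g0 : g != 0 by apply: contraTneq hg => ->; rewrite /ev meval0 ltxx.
by rewrite mulf_neq0 ?invr_eq0 ?tofrac_eq0.
Qed.

Lemma posF1 l1 l2 : posF (1 : Fld l1 l2).
Proof. by exists 1, 1; rewrite /ev !meval1 ltr01 tofrac1 divr1. Qed.

Lemma posF_var l1 l2 j : posF (var l1 l2 j).
Proof.
exists 'X_(inord j), 1; rewrite /ev mevalXU meval1 ltr01 tofrac1 divr1.
by [].
Qed.

Lemma addf_div' (F : fieldType) (a b c d : F) : b != 0 -> d != 0 ->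
  a / b + c / d = (a * d + c * b) / (b * d).
Proof.
move=> b0 d0; rewrite invfM mulrDl; congr (_ + _).
  by rewrite mulrACA divff // mulr1.
by rewrite [b^-1 * _]mulrC mulrACA divff // mulr1.
Qed.

Lemma mulf_div' (F : fieldType) (a b c d : F) :
  (a / b) * (c / d) = (a * c) / (b * d).
Proof. by rewrite invfM mulrACA. Qed.

Lemma posFM l1 l2 (x y : Fld l1 l2) : posF x -> posF y -> posF (x * y).
Proof.
move=> [f [g [hf [hg ->]]]] [f' [g' [hf' [hg' ->]]]].
exists (f * f'), (g * g'); rewrite /ev !mevalM !mulr_gt0 //; split=> //; split=> //.
by rewrite mulf_div' !tofracM.
Qed.

Lemma posFV l1 l2 (x : Fld l1 l2) : posF x -> posF x^-1.
Proof.
move=> [f [g [hf [hg ->]]]]; exists g, f; do 2 split=> //.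
by rewrite invfM invrK mulrC.
Qed.

Lemma posFD l1 l2 (x y : Fld l1 l2) : posF x -> posF y -> posF (x + y).
Proof.
move=> [f [g [hf [hg ex]]]] [f' [g' [hf' [hg' ey]]]].
have g0 : tofrac g != 0 :> Fld l1 l2.
  by rewrite tofrac_eq0; apply: contraTneq hg => ->; rewrite /ev meval0 ltxx.
have g0' : tofrac g' != 0 :> Fld l1 l2.
  by rewrite tofrac_eq0; apply: contraTneq hg' => ->; rewrite /ev meval0 ltxx.
exists (f * g' + f' * g), (g * g'); rewrite /ev mevalD !mevalM.
rewrite addr_gt0 ?mulr_gt0 //; split=> //; split=> //.
by rewrite ex ey addf_div' // tofracD !tofracM.
Qed.

Lemma posFX l1 l2 (z : Fld l1 l2) n : posF z -> posF (z ^+ n).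
Proof. by move=> hz; elim: n => [|n IH]; [rewrite expr0; exact: posF1|rewrite exprS; apply: posFM]. Qed.

Lemma posF_sum l1 l2 n (F : nat -> Fld l1 l2) :
  (forall i, (i <= n)%N -> posF (F i)) -> posF (\sum_(i < n.+1) F i).
Proof.
elim: n F => [|n IH] F hF; first by rewrite big_ord1; apply: hF.
rewrite big_ord_recr /=; apply: posFD; last exact: hF.
by apply: IH => i hi; apply: hF; lia.
Qed.

Lemma posF_pv l1 l2 i k : posF (pv l1 l2 i k).
Proof. by rewrite /pv; case: eqP => _; [exact: posF1|case: eqP => _; exact: posF_var]. Qed.

Lemma Ppoly_sum l1 l2 i z :
  Ppoly l1 l2 i z = \sum_(j < (ell l1 l2 i).+1) pv l1 l2 i j * z ^+ j.
Proof.
rewrite /Ppoly [RHS]big_ord_recl /= {2}/pv eqxx mul1r expr0.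
congr (_ + _); rewrite big_add1 /= big_mkord; apply: eq_bigr => j _.
rewrite /bump leq0n add1n; reflexivity.
Qed.

Lemma Pbar_sum l1 l2 i z :
  Pbar l1 l2 i z = \sum_(j < (ell l1 l2 i).+1)
     (pv l1 l2 i (ell l1 l2 i - j) / pv l1 l2 i (ell l1 l2 i)) * z ^+ j.
Proof.
rewrite /Pbar big_rev_mkord subn0 mulr_suml; apply: eq_bigr => k _.
rewrite subSS subKn; last by rewrite -ltnS.
rewrite mulrAC; reflexivity.
Qed.

Lemma sum_rev (R : nmodType) (F : nat -> R) l :
  \sum_(i < l.+1) F i = \sum_(i < l.+1) F (l - i)%N.
Proof.
rewrite (reindex_inj rev_ord_inj) /=; apply: eq_bigr => i _.
by rewrite subSS.
Qed.

Lemma subalg0 l1 l2 S : subalg l1 l2 S 0.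
Proof. rewrite -(subrr (1 : Fld l1 l2)); apply: sa_add; [exact: sa_one|exact: sa_opp (sa_one _ _ _)]. Qed.

Lemma subalgX l1 l2 S z n : subalg l1 l2 S z -> subalg l1 l2 S (z ^+ n).
Proof.
move=> hz; elim: n => [|n IH]; first by rewrite expr0; exact: sa_one.
by rewrite exprS; apply: sa_mul.
Qed.

Lemma subalg_sum l1 l2 S n (F : nat -> Fld l1 l2) :
  (forall i, (i < n)%N -> subalg l1 l2 S (F i)) ->
  subalg l1 l2 S (\sum_(i < n) F i).
Proof.
elim: n F => [|n IH] F hF; first by rewrite big_ord0; exact: subalg0.
rewrite big_ord_recr /=; apply: sa_add; last exact: hF.
by apply: IH => i hi; apply: hF; lia.
Qed.

Lemma pv_sub l1 l2 S i k : (i = 1 \/ i = 2)%N -> (k <= ell l1 l2 i)%N ->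
  subalg l1 l2 S (pv l1 l2 i k).
Proof.
move=> hi hk; case: k hk => [|k] hk; first by rewrite /pv eqxx; exact: sa_one.
by apply: sa_p; split.
Qed.

Lemma pvl_neq0 l1 l2 i k : pv l1 l2 i k != 0.
Proof. exact: posF_neq0 (posF_pv _ _ _ _). Qed.

Definition Ld (l1 l2 : nat) (j : int) : nat :=
  match absz (j %% 4)%Z with 1%N | 3%N => l1 | _ => l2 end.

Definition qc (l1 l2 : nat) (j : int) (i : nat) : Fld l1 l2 :=
  match absz (j %% 4)%Z with
  | 1%N => pv l1 l2 1 i
  | 2%N => pv l1 l2 2 i
  | 3%N => pv l1 l2 1 (l1 - i) / pv l1 l2 1 l1
  | _ => pv l1 l2 2 (l2 - i) / pv l1 l2 2 l2
  end.

Lemma Qexch_sum l1 l2 j z :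
  Qexch l1 l2 j z = \sum_(i < (Ld l1 l2 j).+1) qc l1 l2 j i * z ^+ i.
Proof.
rewrite /Qexch /Ld /qc; case: (absz _) => [|[|[|[|r]]]];
  rewrite ?Ppoly_sum ?Pbar_sum; reflexivity.
Qed.

Lemma mod4_lt (j : int) : (absz (j %% 4)%Z < 4)%N.
Proof.
have h0 : (0 <= (j %% 4)%Z)%R by apply: modz_ge0.
have h1 : ((j %% 4)%Z < 4)%R by apply: ltz_pmod.
lia.
Qed.

Lemma mod4_add2 (j : int) :
  absz ((j + 2) %% 4)%Z = (((absz (j %% 4)%Z) + 2) %% 4)%N.
Proof.
rewrite -modzDml.
have -> : (j %% 4)%Z = Posz (absz (j %% 4)%Z) by rewrite gez0_abs // modz_ge0.
by rewrite -PoszD modz_nat.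
Qed.

Lemma qc_pos l1 l2 j i : posF (qc l1 l2 j i).
Proof.
rewrite /qc; case: (absz _) => [|[|[|[|r]]]];
  by [apply: posF_pv | apply: posFM; [apply: posF_pv | apply: posFV; apply: posF_pv]].
Qed.

Lemma qc0 l1 l2 j : qc l1 l2 j 0 = 1.
Proof.
rewrite /qc; case: (absz _) => [|[|[|[|r]]]]; rewrite ?subn0 ?divff ?pvl_neq0 //;
  rewrite /pv eqxx; reflexivity.
Qed.

Lemma qc_sub l1 l2 (hl1 : (0 < l1)%N) (hl2 : (0 < l2)%N) S j i :
  (i <= Ld l1 l2 j)%N -> subalg l1 l2 S (qc l1 l2 j i).
Proof.
rewrite /qc /Ld; case: (absz _) => [|[|[|[|r]]]] hi.
- apply: sa_mul; first by apply: pv_sub; [right|rewrite /ell /=; lia].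
  by apply: sa_pinv; split; [right|rewrite /ell /=; lia].
- by apply: pv_sub; [left|rewrite /ell /=; lia].
- by apply: pv_sub; [right|rewrite /ell /=; lia].
- apply: sa_mul; first by apply: pv_sub; [left|rewrite /ell /=; lia].
  by apply: sa_pinv; split; [left|rewrite /ell /=; lia].
- apply: sa_mul; first by apply: pv_sub; [right|rewrite /ell /=; lia].
  by apply: sa_pinv; split; [right|rewrite /ell /=; lia].
Qed.

Lemma recip l1 l2 (hl1 : (0 < l1)%N) (hl2 : (0 < l2)%N) j :
  exists u : Fld l1 l2, (forall S, subalg l1 l2 S u) /\
   forall z, u * Qexch l1 l2 (j + 2) z =
     \sum_(i < (Ld l1 l2 j).+1) qc l1 l2 j i * z ^+ (Ld l1 l2 j - i).
Proof.
rewrite /Qexch mod4_add2 /Ld /qc; have := mod4_lt j.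
case: (absz _) => [|[|[|[|r]]]] //= _.
- exists (pv l1 l2 2 l2)^-1; split.
    by move=> S; apply: sa_pinv; split; [right|rewrite /ell /=; lia].
  move=> z; rewrite Ppoly_sum mulr_sumr /ell /=.
  rewrite (sum_rev (fun i => (pv l1 l2 2 l2)^-1 * (pv l1 l2 2 i * z ^+ i))).
  apply: eq_bigr => i _; rewrite mulrA [_^-1 * _]mulrC; reflexivity.
- exists (pv l1 l2 1 l1); split.
    by move=> S; apply: pv_sub; [left|rewrite /ell /=; lia].
  move=> z; rewrite /Pbar /ell /= mulrC divfK ?pvl_neq0 // big_mkord; reflexivity.
- exists (pv l1 l2 2 l2); split.
    by move=> S; apply: pv_sub; [right|rewrite /ell /=; lia].
  move=> z; rewrite /Pbar /ell /= mulrC divfK ?pvl_neq0 // big_mkord; reflexivity.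
- exists (pv l1 l2 1 l1)^-1; split.
    by move=> S; apply: sa_pinv; split; [left|rewrite /ell /=; lia].
  move=> z; rewrite Ppoly_sum mulr_sumr /ell /=.
  rewrite (sum_rev (fun i => (pv l1 l2 1 l1)^-1 * (pv l1 l2 1 i * z ^+ i))).
  apply: eq_bigr => i _; rewrite mulrA [_^-1 * _]mulrC; reflexivity.
Qed.

Lemma Qexch_pos l1 l2 j z : posF z -> posF (Qexch l1 l2 j z).
Proof.
move=> hz; rewrite Qexch_sum.
have := @posF_sum l1 l2 (Ld l1 l2 j) (fun i => qc l1 l2 j i * z ^+ i).
move=> h; apply: h => i _.
by apply: posFM; [apply: qc_pos | apply: posFX].
Qed.

Lemma Qexch_1 l1 l2 (hl1 : (0 < l1)%N) (hl2 : (0 < l2)%N) S j z :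
  subalg l1 l2 S z -> exists s, subalg l1 l2 S s /\ Qexch l1 l2 j z = 1 + z * s.
Proof.
move=> hz; exists (\sum_(i < Ld l1 l2 j) qc l1 l2 j i.+1 * z ^+ i); split.
  apply: (@subalg_sum l1 l2 S _ (fun i => qc l1 l2 j i.+1 * z ^+ i)) => i hi.
  apply: sa_mul; last exact: subalgX.
  by apply: qc_sub => //; lia.
rewrite Qexch_sum big_ord_recl qc0 expr0 mulr1 mulr_sumr; congr (_ + _).
apply: eq_bigr => i _; rewrite lift0 exprS mulrCA; reflexivity.
Qed.

Lemma fwd_pos l1 l2 m : posF (fwd l1 l2 m).1 /\ posF (fwd l1 l2 m).2.
Proof.
elim: m => [|m [h1 h2]]; first by split; apply: posF_var.
rewrite /=; case: (fwd l1 l2 m) h1 h2 => a b /= h1 h2; split=> //.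
by apply: posFM; [apply: Qexch_pos | apply: posFV].
Qed.

Lemma bwd_pos l1 l2 m : posF (bwd l1 l2 m).1 /\ posF (bwd l1 l2 m).2.
Proof.
elim: m => [|m [h1 h2]]; first by split; apply: posF_var.
rewrite /=; case: (bwd l1 l2 m) h1 h2 => a b /= h1 h2; split=> //.
by apply: posFM; [apply: Qexch_pos | apply: posFV].
Qed.

Lemma x_pos l1 l2 j : posF (xseq l1 l2 j).
Proof. by rewrite /xseq; case: ifP => _; [apply: (fwd_pos _ _ _).1|apply: (bwd_pos _ _ _).1]. Qed.

Lemma xP l1 l2 (n : nat) : xseq l1 l2 (n.+1)%:Z = (fwd l1 l2 n).1.
Proof.
have h : (1 <= Posz n.+1)%R by lia.
rewrite /xseq h.
have -> : (Posz n.+1 - 1 = Posz n)%R by lia.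
reflexivity.
Qed.

Lemma xN l1 l2 (m : nat) : xseq l1 l2 (1 - m%:Z) = (bwd l1 l2 m).1.
Proof.
case: m => [|m].
  have -> : (1 - Posz 0 = Posz 1)%R by lia.
  exact: xP l1 l2 0.
have h : (1 <= 1 - Posz m.+1)%R = false by apply/negbTE; lia.
rewrite /xseq h.
have -> : (1 - (1 - Posz m.+1) = Posz m.+1)%R by lia.
reflexivity.
Qed.

Lemma fwd_shift l1 l2 m : (fwd l1 l2 m.+1).1 = (fwd l1 l2 m).2.
Proof. rewrite /=; case: (fwd l1 l2 m) => a b; reflexivity. Qed.

Lemma fwd_step l1 l2 m :
  (fwd l1 l2 m.+1).2 = Qexch l1 l2 (m.+2)%:Z (fwd l1 l2 m).2 / (fwd l1 l2 m).1.
Proof. rewrite /=; case: (fwd l1 l2 m) => a b; reflexivity. Qed.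

Lemma bwd_shift l1 l2 m : (bwd l1 l2 m.+1).2 = (bwd l1 l2 m).1.
Proof. rewrite /=; case: (bwd l1 l2 m) => a b; reflexivity. Qed.

Lemma bwd_step l1 l2 m :
  (bwd l1 l2 m.+1).1 = Qexch l1 l2 (1 - m%:Z) (bwd l1 l2 m).1 / (bwd l1 l2 m).2.
Proof. rewrite /=; case: (bwd l1 l2 m) => a b; reflexivity. Qed.

Lemma int_cases (j : int) :
  (exists m : nat, j = (m.+2)%:Z) \/ (exists m : nat, j = 1 - m%:Z).
Proof.
case: j => [[|[|m]]|n].
- by right; exists 1%N.
- by right; exists 0%N.
- by left; exists m.
- by right; exists n.+2; rewrite NegzE; lia.
Qed.

Lemma xrel l1 l2 (j : int) :
  xseq l1 l2 (j + 1) * xseq l1 l2 (j - 1) = Qexch l1 l2 j (xseq l1 l2 j).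
Proof.
case: (int_cases j) => [[m ->]|[m ->]].
- have -> : (Posz m.+2 + 1 = Posz m.+3)%R by lia.
  have -> : (Posz m.+2 - 1 = Posz m.+1)%R by lia.
  rewrite !xP fwd_shift fwd_step fwd_shift divfK //.
  exact: posF_neq0 (fwd_pos _ _ _).1.
- have -> : (1 - Posz m - 1 = 1 - Posz m.+1)%R by lia.
  rewrite !xN bwd_step.
  have -> : xseq l1 l2 (1 - Posz m + 1) = (bwd l1 l2 m).2.
    case: m => [|m].
      have -> : (1 - Posz 0 + 1 = Posz 2)%R by lia.
      rewrite xP; reflexivity.
    have -> : (1 - Posz m.+1 + 1 = 1 - Posz m)%R by lia.
    by rewrite xN bwd_shift.
  rewrite mulrC divfK //.
  exact: posF_neq0 (bwd_pos _ _ _).2.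
Qed.

From mathcomp Require Import ring.

Lemma alg1 (R : comNzRingType) (A C X q b t w Sg Sg' : R) :
  A * C * Sg = Sg' + b * w -> X * C = 1 + b * t ->
  A * C * (Sg + q * X) = (Sg' + q * A) + b * (w + q * A * t).
Proof.
move=> h1 h2; rewrite mulrDr h1.
have -> : A * C * (q * X) = q * A * (X * C) by ring.
rewrite h2; ring.
Qed.

Lemma alg2 (R : comNzRingType) (a b c e t : R) (L : nat) :
  (a * c) ^+ L = 1 + b * t -> e = a ^+ L * (c ^+ L * e) - (e * b) * t.
Proof.
move=> h; rewrite mulrA -exprMn h; ring.
Qed.

Lemma alg3 (R : comNzRingType) (e b cL S' ud w : R) :
  e * b = S' -> ud * b = cL * S' - b * w -> b * (cL * e) = b * (ud + w).
Proof.
move=> h1 h2; have -> : b * (cL * e) = cL * (e * b) by ring.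
rewrite h1; have -> : b * (ud + w) = ud * b + b * w by ring.
rewrite h2; ring.
Qed.

Lemma pow_mod1 l1 l2 S (a b c s : Fld l1 l2) :
  subalg l1 l2 S b -> subalg l1 l2 S s -> a * c = 1 + b * s ->
  forall n, exists t, subalg l1 l2 S t /\ (a * c) ^+ n = 1 + b * t.
Proof.
move=> hb hs hac; elim => [|n [t [ht et]]].
  exists 0; split; first exact: subalg0.
  rewrite expr0 mulr0 addr0; reflexivity.
exists (t + s + b * t * s); split.
  by apply: sa_add; [apply: sa_add|apply: sa_mul; [apply: sa_mul|]].
rewrite exprSr et hac.
have h : forall (R : comNzRingType) (b t s : R),
  (1 + b * t) * (1 + b * s) = 1 + b * (t + s + b * t * s) by move=> *; ring.
exact: h.
Qed.

Lemma key l1 l2 S (L : nat) (q : nat -> Fld l1 l2) (u a b c d e s : Fld l1 l2) :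
  (forall j, (j <= L)%N -> subalg l1 l2 S (q j)) -> subalg l1 l2 S u ->
  subalg l1 l2 S a -> subalg l1 l2 S b -> subalg l1 l2 S c ->
  subalg l1 l2 S d -> subalg l1 l2 S s -> b != 0 ->
  e * b = \sum_(j < L.+1) q j * a ^+ j ->
  u * (b * d) = \sum_(j < L.+1) q j * c ^+ (L - j) ->
  a * c = 1 + b * s ->
  subalg l1 l2 S e.
Proof.
move=> hq hu ha hb hc hd hs b0 h1 h2 h3.
have pw := pow_mod1 hb hs h3.
have part : forall n, (n <= L.+1)%N -> exists w, subalg l1 l2 S w /\
   c ^+ L * \sum_(j < n) q j * a ^+ j = \sum_(j < n) q j * c ^+ (L - j) + b * w.
  elim => [|n IH] hn.
    exists 0; split; first exact: subalg0.
    rewrite !big_ord0 !mulr0 addr0; reflexivity.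
  have [w [hw ew]] := IH (ltnW hn).
  have [t [ht et]] := pw n.
  exists (w + q n * c ^+ (L - n) * t); split.
    apply: sa_add => //; apply: sa_mul => //; apply: sa_mul; [apply: hq; lia|exact: subalgX].
  rewrite !big_ord_recr /=.
  have eL : c ^+ L = c ^+ (L - n) * c ^+ n by rewrite -exprD subnK //; lia.
  rewrite eL; apply: alg1; first by rewrite -eL.
  by rewrite -exprMn.
have [w [hw ew]] := part L.+1 (leqnn _).
have e1 : b * (c ^+ L * e) = b * (u * d + w).
  apply: (alg3 h1); rewrite ew -h2; ring.
have e2 := mulfI b0 e1.
have [t [ht et]] := pw L.
rewrite (alg2 e et) e2.
apply: sa_add; first by apply: sa_mul; [apply: subalgX|apply: sa_add => //; apply: sa_mul].
apply: sa_opp; apply: sa_mul => //; rewrite h1.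
apply: (@subalg_sum l1 l2 S _ (fun j => q j * a ^+ j)) => j hj.
by apply: sa_mul; [apply: hq; lia|apply: subalgX].
Qed.

Lemma subalg_mono l1 l2 (S T : Fld l1 l2 -> Prop) y :
  (forall z, S z -> subalg l1 l2 T z) -> subalg l1 l2 S y -> subalg l1 l2 T y.
Proof.
move=> hST; elim => {y}.
- by move=> y /hST.
- by move=> i k h; apply: sa_p.
- by move=> i k h; apply: sa_pinv.
- exact: sa_one.
- by move=> y _ h; apply: sa_opp.
- by move=> y z _ h1 _ h2; apply: sa_add.
- by move=> y z _ h1 _ h2; apply: sa_mul.
Qed.

Lemma Qexch4 l1 l2 (k : int) z : Qexch l1 l2 (k + 2 + 2) z = Qexch l1 l2 k z.
Proof.
have -> : (k + 2 + 2 = k + 4)%R by lia.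
by rewrite /Qexch modzDr.
Qed.

Lemma stepL l1 l2 (hl1 : (0 < l1)%N) (hl2 : (0 < l2)%N) (k : int) y :
  Afour l1 l2 k y -> Afour l1 l2 (k + 1) y.
Proof.
apply: subalg_mono.
set x := xseq l1 l2.
have g0 : Afour l1 l2 (k + 1) (x k).
  by apply: sa_gen; left; congr (xseq l1 l2 _); lia.
have g1 : Afour l1 l2 (k + 1) (x (k + 1)).
  by apply: sa_gen; right; left.
have g2 : Afour l1 l2 (k + 1) (x (k + 2)).
  by apply: sa_gen; right; right; left; congr (xseq l1 l2 _); lia.
have g3 : Afour l1 l2 (k + 1) (x (k + 3)).
  by apply: sa_gen; right; right; right; congr (xseq l1 l2 _); lia.
have gm : Afour l1 l2 (k + 1) (x (k - 1)).
  have [u [hu hrec]] := recip hl1 hl2 k.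
  have [s [hs es]] := Qexch_1 hl1 hl2 (k + 1) g1.
  apply: (@key l1 l2 _ (Ld l1 l2 k) (qc l1 l2 k) u (x k) (x (k + 1)) (x (k + 2)) (x (k + 3))
     _ s) => //.
  - by move=> j hj; apply: qc_sub.
  - exact: posF_neq0 (x_pos _ _ _).
  - by rewrite mulrC xrel Qexch_sum.
  - rewrite -hrec; congr (_ * _).
    have := xrel l1 l2 (k + 2).
    have -> : (k + 2 + 1 = k + 3)%R by lia.
    have -> : (k + 2 - 1 = k + 1)%R by lia.
    by rewrite mulrC.
  - rewrite -es; have := xrel l1 l2 (k + 1).
    have -> : (k + 1 + 1 = k + 2)%R by lia.
    have -> : (k + 1 - 1 = k)%R by lia.
    by rewrite mulrC.
move=> z [->|[->|[->|->]]] //.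
Qed.

Lemma stepR l1 l2 (hl1 : (0 < l1)%N) (hl2 : (0 < l2)%N) (k : int) y :
  Afour l1 l2 (k + 1) y -> Afour l1 l2 k y.
Proof.
apply: subalg_mono.
set x := xseq l1 l2.
have g0 : Afour l1 l2 k (x (k - 1)) by apply: sa_gen; left.
have g1 : Afour l1 l2 k (x k) by apply: sa_gen; right; left.
have g2 : Afour l1 l2 k (x (k + 1)) by apply: sa_gen; right; right; left.
have g3 : Afour l1 l2 k (x (k + 2)) by apply: sa_gen; right; right; right.
have gp : Afour l1 l2 k (x (k + 3)).
  have [u [hu hrec]] := recip hl1 hl2 (k + 2).
  have [s [hs es]] := Qexch_1 hl1 hl2 (k + 1) g2.
  apply: (@key l1 l2 _ (Ld l1 l2 (k + 2)) (qc l1 l2 (k + 2)) u (x (k + 2)) (x (k + 1)) (x k)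
     (x (k - 1)) _ s) => //.
  - by move=> j hj; apply: qc_sub.
  - exact: posF_neq0 (x_pos _ _ _).
  - rewrite -Qexch_sum; have := xrel l1 l2 (k + 2).
    have -> : (k + 2 + 1 = k + 3)%R by lia.
    by have -> : (k + 2 - 1 = k + 1)%R by lia.
  - by rewrite -hrec Qexch4 xrel.
  - rewrite -es; have := xrel l1 l2 (k + 1).
    have -> : (k + 1 + 1 = k + 2)%R by lia.
    by have -> : (k + 1 - 1 = k)%R by lia.
move=> z [->|[->|[->|->]]] //.
- by have -> : (k + 1 - 1 = k)%R by lia.
- by have -> : (k + 1 + 1 = k + 2)%R by lia.
- by have -> : (k + 1 + 2 = k + 3)%R by lia.
Qed.

Lemma shiftN l1 l2 (hl1 : (0 < l1)%N) (hl2 : (0 < l2)%N) (k : int) (n : nat) y :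
  Afour l1 l2 k y <-> Afour l1 l2 (k + n%:Z) y.
Proof.
elim: n => [|n IH]; first by rewrite addr0.
have -> : (k + Posz n.+1 = k + Posz n + 1)%R by lia.
split=> h; first by apply: stepL => //; apply/IH.
by apply/IH; apply: stepR.
Qed.

Lemma shift l1 l2 (hl1 : (0 < l1)%N) (hl2 : (0 < l2)%N) (k k' : int) y :
  Afour l1 l2 k y <-> Afour l1 l2 k' y.
Proof.
case: (lerP k k') => h.
  have -> : k' = (k + Posz (absz (k' - k)))%R by rewrite gez0_abs; lia.
  exact: shiftN.
have -> : k = (k' + Posz (absz (k - k')))%R by rewrite gez0_abs; lia.
by symmetry; apply: shiftN.
Qed.

Theorem theoremA2 (l1 l2 : nat) (hl1 : (0 < l1)%N) (hl2 : (0 < l2)%N) (k : int) :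
  forall y : Fld l1 l2, Aalg l1 l2 y <-> Afour l1 l2 k y.
Proof.
move=> y; split; apply: subalg_mono => z.
  move=> [m ->]; apply/(shift hl1 hl2 m).
  by apply: sa_gen; right; left.
by move=> h; apply: sa_gen; case: h => [->|[->|[->|->]]]; eexists; reflexivity.
Qed.
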